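(* Fix $w,z\in S_n$ and let $\mathcal{L}=\{x\in C_z^\vee:\kappa(x)\ge\kappa(w)\}$. If $x,y\in\mathcal{L}$, then $x\cap y\in\mathcal{L}$ and $x\cup y\in\mathcal{L}$.
   Context: Permutations are in one-line notation. For $x\in S_n$: inversion table $\iota_k(x)=\#\{i<x^{-1}(k):x(i)>k\}$; code $\kappa_k(x)=\#\{i<x(k):x^{-1}(i)>k\}$. A permutation is determined by its inversion table, and a sequence $(c_1,\dots,c_n)$ is an inversion table iff $0\le c_k\le n-k$. Vectors are compared componentwise; the inversion table order on $S_n$ is $x\le y$ iff $\iota(x)\le\iota(y)$. For $x,y\in S_n$, $x\cap y$ and $x\cup y$ are the permutations with inversion tables the componentwise minimum and maximum of $\iota(x)$ and $\iota(y)$. For $z\in S_n$, $C_z^\vee$ is the Boolean sublattice of the inversion table order generated by the elements covered by $z$, namely the set of $x\in S_n$ with $\iota_k(z)-1\le\iota_k(x)\le\iota_k(z)$ for all $k$. *)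

(* Defs.v *)
(* Permutations of {0,...,n-1} as {perm 'I_n}; paper's values
   1..n are shifted to 0..n-1 (k in the paper = k+1 here). *)
From mathcomp Require Import all_boot all_order all_fingroup.
Set Implicit Arguments. Unset Strict Implicit. Unset Printing Implicit Defensive.

Definition invtab n (x : {perm 'I_n}) (k : 'I_n) : nat :=
  #|[set i : 'I_n | (i < (x^-1)%g k) && (k < x i)]|.

Definition code n (x : {perm 'I_n}) (k : 'I_n) : nat :=
  #|[set i : 'I_n | (i < x k) && (k < (x^-1)%g i)]|.

(* the permutation with a given inversion table (identity if none exists) *)
Definition perm_of_invtab n (c : 'I_n -> nat) : {perm 'I_n} :=
  odflt 1%g [pick u : {perm 'I_n} | [forall k, invtab u k == c k]].

Definition pcap n (x y : {perm 'I_n}) : {perm 'I_n} :=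
  perm_of_invtab (fun k => minn (invtab x k) (invtab y k)).
Definition pcup n (x y : {perm 'I_n}) : {perm 'I_n} :=
  perm_of_invtab (fun k => maxn (invtab x k) (invtab y k)).

Definition Cvee n (z x : {perm 'I_n}) : Prop :=
  forall k, invtab z k - 1 <= invtab x k <= invtab z k.

Definition inL n (w z x : {perm 'I_n}) : Prop :=
  Cvee z x /\ forall k, code w k <= code x k.

(* Main.v *)
Require Import Defs.
From mathcomp Require Import all_boot all_order all_fingroup zify.
Set Implicit Arguments. Unset Strict Implicit. Unset Printing Implicit Defensive.

Fixpoint lit (s : seq nat) (k : nat) : nat :=
  if s is u :: s' then (if u == k then 0 else (k < u) + lit s' k) else 0.
Fixpoint lcd (s : seq nat) (p : nat) : nat :=
  match s, p with
  | [::], _ => 0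
  | u :: s', 0 => count (fun v => v < u) s'
  | u :: s', p'.+1 => lcd s' p'
  end.
Fixpoint ins0 (c : nat) (t : seq nat) : seq nat :=
  match c, t with
  | 0, _ => 0 :: t
  | c'.+1, [::] => [:: 0]
  | c'.+1, u :: t' => u :: ins0 c' t'
  end.
Definition sh (t : seq nat) := map succn t.
Definition insF (c : nat) (v : nat -> nat) (p : nat) : nat :=
  if p < c then (v p).+1 else if p == c then 0 else v p.-1.
Fixpoint F (n : nat) (a : nat -> nat) : nat -> nat :=
  if n is n'.+1 then insF (a 0) (F n' (fun k => a k.+1)) else fun _ => 0.
Definition valid n (a : nat -> nat) := forall k, k < n -> a k < n - k.

Lemma lit_sh t k : lit (sh t) k.+1 = lit t k.
Proof. elim: t => //= u t ->. by rewrite eqSS ltnS. Qed.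

Lemma lcd_sh t p : lcd (sh t) p = lcd t p.
Proof.
elim: t p => [|u t IH] [|p] //=. by rewrite count_map.
Qed.

Lemma lit_ins0_0 c t : c <= size t -> lit (ins0 c (sh t)) 0 = c.
Proof.
elim: c t => [|c IH] [|u t] //= H. by rewrite IH.
Qed.

Lemma lit_ins0_S c t k : lit (ins0 c (sh t)) k.+1 = lit t k.
Proof.
elim: c t => [|c IH] [|u t] //=; rewrite ?lit_sh ?IH ?eqSS ?ltnS //.
Qed.

Lemma count_ins0 P c l : count P (ins0 c l) = P 0 + count P l.
Proof.
elim: c l => [|c IH] [|u l] //=; rewrite ?addn0 // IH; lia.
Qed.

Lemma lcd_ins0 c t p : c <= size t -> lcd (ins0 c (sh t)) p = insF c (lcd t) p.
Proof.
rewrite /insF; elim: c t p => [|c IH] [|u t] [|p] //= H.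
all: try (by rewrite ?lcd_sh ?count_ins0 ?count_map).
- rewrite add0n; apply/eqP; rewrite eqn0Ngt -has_count; by apply/hasPn.
- by case: p => [|p]; rewrite ?count_map ?lcd_sh.
- rewrite IH // ltnS eqSS. case: (ltnP p c) => Hp //=.
  case: eqP => // Hpc; case: p Hp Hpc => //= p; lia.
Qed.

Lemma perm_ins0 c l : perm_eq (ins0 c l) (0 :: l).
Proof.
elim: c l => [|c IH] [|u l] //=.
have := IH l; rewrite -(perm_cons u) => H. apply: perm_trans H _.
apply/seq.permP => P /=; lia.
Qed.

Lemma ins0E c l : c <= size l -> ins0 c l = take c l ++ 0 :: drop c l.
Proof. elim: c l => [|c IH] [|u l] //= H. by rewrite IH. Qed.

Lemma iota1 n : iota 1 n = sh (iota 0 n).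
Proof. by rewrite /sh -[1]/(1 + 0) iotaDl. Qed.

Lemma decomp n s : perm_eq s (iota 0 n.+1) ->
  exists c t, [/\ perm_eq t (iota 0 n), c <= size t & s = ins0 c (sh t)].
Proof.
move=> Hs.
have s0 : 0 \in s by rewrite (perm_mem Hs) mem_iota.
have us : uniq s by rewrite (perm_uniq Hs) iota_uniq.
have szs : size s = n.+1 by rewrite (perm_size Hs) size_iota.
set c := index 0 s.
have Hc : c < size s by rewrite index_mem.
set l := take c s ++ drop c.+1 s.
have sE : s = take c s ++ 0 :: drop c.+1 s.
  by rewrite -{1}(cat_take_drop c s) (drop_nth 0 Hc) nth_index.
have pl : perm_eq s (0 :: l).
  rewrite {1}sE; apply/seq.permP => P /=; rewrite /l !count_cat /=; lia.
have ul : uniq (0 :: l) by rewrite -(perm_uniq pl).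
move: ul => /= /andP [l0 ul].
have szl : size l = n by have := perm_size pl; rewrite szs /= => [[]].
exists c, (map predn l); split.
- have : perm_eq l (iota 1 n).
    by rewrite -(perm_cons 0); apply: perm_trans _ Hs; rewrite perm_sym.
  move/(perm_map predn). rewrite iota1 /sh -map_comp map_id. by [].
- by rewrite size_map szl -ltnS -szs.
- have -> : sh (map predn l) = l.
    rewrite /sh -map_comp -[RHS]map_id; apply/eq_in_map => v vl /=.
    rewrite prednK //; case: v vl => //; by rewrite (negbTE l0).
  rewrite ins0E; last by rewrite szl -ltnS -szs.
  have szt : size (take c s) = c by rewrite size_take Hc.
  by rewrite {1}sE /l take_size_cat // drop_size_cat.
Qed.

Lemma F_ext n a b p : (forall k, k < n -> a k = b k) -> F n a p = F n b p.
Proof.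
elim: n a b p => [|n IH] a b p H //=.
rewrite /insF H //. have E : forall q, F n (fun k => a k.+1) q = F n (fun k => b k.+1) q.
  by move=> q; apply: IH => k Hk; apply: H.
by rewrite !E.
Qed.

Lemma T1 n s : perm_eq s (iota 0 n) ->
  (forall p, lcd s p = F n (lit s) p) /\ valid n (lit s).
Proof.
elim: n s => [|n IH] s Hs.
  have -> : s = [::] by apply/nilP; rewrite /nilp (perm_size Hs).
  by split => // p.
have [c [t [Ht Hc ->]]] := decomp Hs.
have [IH1 IH2] := IH t Ht.
have szt : size t = n by rewrite (perm_size Ht) size_iota.
split.
- move=> p; rewrite lcd_ins0 //= lit_ins0_0 // /insF.
  have E : forall q, F n (fun k => lit (ins0 c (sh t)) k.+1) q = lcd t q.
    by move=> q; rewrite IH1; apply: F_ext => k _; rewrite lit_ins0_S.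
  by rewrite !E.
- move=> [|k] Hk; first by rewrite lit_ins0_0 //; lia.
  rewrite lit_ins0_S; have := IH2 k; lia.
Qed.

Fixpoint L n (c : nat -> nat) : seq nat :=
  if n is n'.+1 then ins0 (c 0) (sh (L n' (fun k => c k.+1))) else [::].

Lemma T2 n c : valid n c ->
  perm_eq (L n c) (iota 0 n) /\ forall k, k < n -> lit (L n c) k = c k.
Proof.
elim: n c => [|n IH] c Hc; first by split.
have [IH1 IH2] := IH (fun k => c k.+1) (fun k Hk => Hc k.+1 Hk).
have szt : size (L n (fun k => c k.+1)) = n by rewrite (perm_size IH1) size_iota.
split => /=.
- apply: perm_trans (perm_ins0 _ _) _.
  by rewrite /= -add1n iotaDl -/(sh (iota 0 n)) perm_cons /sh perm_map.
- move=> [|k] Hk; first by rewrite lit_ins0_0 // szt; have := Hc 0; lia.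
  by rewrite lit_ins0_S IH2.
Qed.

Lemma insF_mono c u v p : (forall q, u q <= v q) -> insF c u p <= insF c v p.
Proof. move=> H; rewrite /insF; case: ifP => _; first by rewrite ltnS. by case: ifP. Qed.

Lemma insF_key a0 b0 e u v p : a0 <= b0.+1 -> b0 <= a0.+1 ->
  (e = minn a0 b0 \/ e = maxn a0 b0) ->
  minn (insF a0 u p) (insF b0 v p) <= insF e (fun q => minn (u q) (v q)) p.
Proof.
move=> H1 H2 He; rewrite /insF.
case: (ltnP p a0) => Ha; case: (ltnP p b0) => Hb; case: (ltnP p e) => Hee;
 rewrite ?(eq_sym p) //; do ?case: eqP => //; lia.
Qed.

Lemma M n a b p : (forall k, k < n -> a k <= (b k).+1 /\ b k <= (a k).+1) ->
  minn (F n a p) (F n b p) <= F n (fun k => minn (a k) (b k)) p /\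
  minn (F n a p) (F n b p) <= F n (fun k => maxn (a k) (b k)) p.
Proof.
elim: n a b p => [|n IH] a b p H /=; first by [].
have [H1 H2] := H 0 isT.
have IH' := IH (fun k => a k.+1) (fun k => b k.+1) ^~ (fun k Hk => H k.+1 Hk).
split.
- apply: leq_trans (@insF_key _ _ _ _ _ p H1 H2 (or_introl erefl)) _.
  by apply: insF_mono => q; case: (IH' q).
- apply: leq_trans (@insF_key _ _ _ _ _ p H1 H2 (or_intror erefl)) _.
  by apply: insF_mono => q; case: (IH' q).
Qed.

Lemma count_sum P (s : seq nat) : count P s = \sum_(i < size s) P (nth 0 s i).
Proof. elim: s => [|u s IH] /=; first by rewrite big_ord0. by rewrite big_ord_recl IH. Qed.

Lemma lit_sum s k : lit s k = \sum_(i < size s) ((i < index k s) && (k < nth 0 s i)).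
Proof.
elim: s => [|u s IH] /=; first by rewrite big_ord0.
rewrite big_ord_recl /=. case: eqP => Hu /=.
  by rewrite big1.
by rewrite IH.
Qed.

Lemma lcd_sum s p : lcd s p = \sum_(i < size s) ((p < i) && (nth 0 s i < nth 0 s p)).
Proof.
elim: s p => [|u s IH] p /=; first by rewrite big_ord0.
rewrite big_ord_recl /=. case: p => [|p] /=.
  by rewrite count_sum.
by rewrite IH.
Qed.

Definition s_of n (x : {perm 'I_n}) : seq nat := [seq val (x i) | i <- enum 'I_n].

Lemma size_s_of n (x : {perm 'I_n}) : size (s_of x) = n.
Proof. by rewrite size_map size_enum_ord. Qed.

Lemma nth_s_of n (x : {perm 'I_n}) (i : 'I_n) : nth 0 (s_of x) i = x i.
Proof. by rewrite (nth_map i) ?size_enum_ord // nth_ord_enum. Qed.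

Lemma perm_s_of n (x : {perm 'I_n}) : perm_eq (s_of x) (iota 0 n).
Proof.
have -> : s_of x = map val (map x (enum 'I_n)) by rewrite -map_comp.
rewrite -val_enum_ord; apply: perm_map.
apply: uniq_perm.
- by rewrite (map_inj_uniq (@perm_inj _ x)) enum_uniq.
- exact: enum_uniq.
move=> i; rewrite mem_enum; apply/mapP; exists (x^-1 i)%g; rewrite ?mem_enum //.
by rewrite permKV.
Qed.

Lemma card_sum n (P : pred 'I_n) : #|[set i | P i]| = \sum_(i < n) P i.
Proof.
rewrite -sum1_card big_mkcond /=; apply: eq_bigr => i _; rewrite inE; by case: (P i).
Qed.

Lemma invtab_lit n (x : {perm 'I_n}) k : invtab x k = lit (s_of x) k.
Proof.
have us : uniq (s_of x) by rewrite (perm_uniq (perm_s_of x)) iota_uniq.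
rewrite /invtab card_sum lit_sum size_s_of.
have -> : index (val k) (s_of x) = (x^-1 k)%g.
  have H : val (x^-1 k)%g < size (s_of x) by rewrite size_s_of ltn_ord.
  by have := index_uniq 0 H us; rewrite nth_s_of permKV.
by apply: eq_bigr => i _; rewrite nth_s_of.
Qed.

Lemma code_lcd n (x : {perm 'I_n}) p : code x p = lcd (s_of x) p.
Proof.
rewrite /code card_sum lcd_sum size_s_of (reindex_inj (@perm_inj _ x)) /=.
by apply: eq_bigr => i _; rewrite !nth_s_of permK andbC.
Qed.

Lemma of_list n s : perm_eq s (iota 0 n) -> exists u : {perm 'I_n}, s_of u = s.
Proof.
move=> Hs.
have us : uniq s by rewrite (perm_uniq Hs) iota_uniq.
have szs : size s = n by rewrite (perm_size Hs) size_iota.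
have lt : forall i : 'I_n, nth 0 s i < n.
  move=> i; have : nth 0 s i \in iota 0 n by rewrite -(perm_mem Hs) mem_nth // szs.
  by rewrite mem_iota.
pose f := fun i : 'I_n => Ordinal (lt i).
have finj : injective f.
  move=> i j /(congr1 val) /= /eqP.
  by rewrite nth_uniq ?szs // => /eqP /val_inj.
exists (perm finj).
rewrite /s_of (eq_map (g := fun i : 'I_n => nth 0 s i)); last first.
  by move=> i; rewrite permE.
by rewrite -[RHS](mkseq_nth 0) szs /mkseq -val_enum_ord -map_comp.
Qed.

Lemma poi_spec n (c : 'I_n -> nat) : (forall k : 'I_n, c k < n - k) ->
  forall k, invtab (perm_of_invtab c) k = c k.
Proof.
move=> Hc.
pose cn := fun k : nat => if insub k is Some o then c o else 0.
have Vc : valid n cn.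
  move=> k Hk; rewrite /cn; case: insubP => [o _ <-|]; first exact: Hc.
  by rewrite Hk.
have [Hp Hl] := T2 Vc.
have [u Hu] := of_list Hp.
have Eu : forall k : 'I_n, invtab u k = c k.
  by move=> k; rewrite invtab_lit Hu Hl // /cn valK.
rewrite /perm_of_invtab; case: pickP => [u' /forallP H | H] /=.
  by move=> k; apply/eqP; apply: H.
have := H u; move/negbT/forallPn => [k]; by rewrite Eu eqxx.
Qed.

Lemma key n (x y : {perm 'I_n}) (b : bool) :
  (forall k : 'I_n, invtab x k <= (invtab y k).+1 /\ invtab y k <= (invtab x k).+1) ->
  let v := perm_of_invtab (fun k => (if b then minn else maxn) (invtab x k) (invtab y k)) in
  (forall k, invtab v k = (if b then minn else maxn) (invtab x k) (invtab y k)) /\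
  (forall p, minn (code x p) (code y p) <= code v p).
Proof.
move=> Hxy v.
have [_ Va] := T1 (perm_s_of x).
have [_ Vb] := T1 (perm_s_of y).
have Ev : forall k, invtab v k = (if b then minn else maxn) (invtab x k) (invtab y k).
  apply: poi_spec => k.
  have := Va k (ltn_ord k); have := Vb k (ltn_ord k).
  rewrite -!invtab_lit; case: b {v}; lia.
split => // p.
rewrite !code_lcd.
have [-> _] := T1 (perm_s_of x).
have [-> _] := T1 (perm_s_of y).
have [-> _] := T1 (perm_s_of v).
have Hab : forall k, k < n -> lit (s_of x) k <= (lit (s_of y) k).+1 /\
                             lit (s_of y) k <= (lit (s_of x) k).+1.
  move=> k Hk; have := Hxy (Ordinal Hk); by rewrite !invtab_lit.
have [M1 M2] := M p Hab.
have -> : F n (lit (s_of v)) p =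
  F n (fun k => (if b then minn else maxn) (lit (s_of x) k) (lit (s_of y) k)) p.
  apply: F_ext => k Hk; have := Ev (Ordinal Hk); by rewrite !invtab_lit.
by destruct b.
Qed.

Theorem lemma5p2 (n : nat) (w z x y : {perm 'I_n}) :
  inL w z x -> inL w z y -> inL w z (pcap x y) /\ inL w z (pcup x y).
Proof.
move=> [Cx Kx] [Cy Ky].
have Hxy : forall k : 'I_n, invtab x k <= (invtab y k).+1 /\ invtab y k <= (invtab x k).+1.
  move=> k; have := Cx k; have := Cy k; lia.
have [E1 K1] := key true Hxy.
have [E2 K2] := key false Hxy.
split; split.
- move=> k; rewrite /pcap E1; have := Cx k; have := Cy k; lia.
- move=> p; apply: leq_trans (K1 p); have := Kx p; have := Ky p; lia.
- move=> k; rewrite /pcup E2; have := Cx k; have := Cy k; lia.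
- move=> p; apply: leq_trans (K2 p); have := Kx p; have := Ky p; lia.
Qed.
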